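(* In $Rex(w_{0,4})$, where $w_{0,4}=s_1s_2s_1s_3s_2s_1\in S_4$, consider the path morphisms of the paths $212321\to213231\to212321\to213231$ and $212321\to213231$; they are equal. Likewise, the path morphisms of $213231\to212321\to213231\to212321$ and $213231\to212321$ are equal. Equivalently, in the conflated expression graph $\Gamma_{w_{0,4}}$, with $A$ the cloud $\{212321\}$ and $B$ the cloud $\{213231,231231,213213,231213\}$, one has $f([A,B,A,B])=f([A,B])$ and $f([B,A,B,A])=f([B,A])$.
   Context: $S_4$ has simple reflections $s_i=(i\ i+1)$, $i=1,2,3$; a word such as $212321$ denotes the reduced expression $s_2s_1s_2s_3s_2s_1$. The rex graph $Rex(w)$ has as vertices the reduced expressions of $w$, with an edge between two that differ by one braid relation on consecutive letters: $i(i+1)i\leftrightarrow(i+1)i(i+1)$ (adjacent edge) or $ij\leftrightarrow ji$ with $|i-j|\ge2$ (distant edge). Let $R=\mathbb{R}[x_1,\dots,x_4]$, graded with $\deg x_i=2$, $s_i$ swapping $x_i,x_{i+1}$; $B_i=R\otimes_{R^{s_i}}R(1)$ and $B_{i_1\cdots i_k}=B_{i_1}\otimes_R\cdots\otimes_RB_{i_k}$. For $i\ne j$ with $s_is_j$ of order $m_{ij}\in\{2,3\}$, $f_{ij}:B_iB_jB_i\cdots\to B_jB_iB_j\cdots$ ($m_{ij}$ factors) is the unique degree-$0$ bimodule map sending $1\otimes\cdots\otimes1\mapsto1\otimes\cdots\otimes1$; traversing an edge from $\underline u$ to $\underline v$ (replacing a consecutive $iji\cdots$ by $jij\cdots$)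 gives $\mathrm{Id}\otimes f_{ij}\otimes\mathrm{Id}:B_{\underline u}\to B_{\underline v}$, and the path morphism $f(p)$ is the composite along the path. A cloud is a class of reduced expressions under the relation generated by distant edges; the conflated expression graph has clouds as vertices and an edge between distinct clouds joined by an adjacent edge, and the path morphism of a path of clouds is $f$ of a path in $Rex(w)$ visiting the clouds in that order, moving inside clouds by distant edges and between consecutive clouds by one adjacent edge (here the unique adjacent edge between $A$ and $B$ is $212321$—$213231$). *)

(* Defs.v *)
From mathcomp Require Import all_boot all_algebra all_fingroup.
From mathcomp Require Import Rstruct.
From mathcomp Require Import mpoly.
From Stdlib Require Import Reals.

Unset Implicit Arguments.
Unset Strict Implicit.
Unset Printing Implicit Defensive.

Import GRing.Theory.
Local Open Scope ring_scope.

(* Concrete model of Bott-Samelson bimodules.                                *)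
(*   R = R[x_1..x_4].  For a word w = i_1 ... i_k (letters in {1,2,3}),      *)
(*   B_w = R (x)_{R^{s_{i_1}}} R (x)_{R^{s_{i_2}}} ... (x)_{R^{s_{i_k}}} R    *)
(*   (grading shifts omitted; they are uniform for words of equal length).   *)
(*   Since R is commutative, B_w is the quotient of the polynomial ring      *)
(*   R^{(x)(k+1)} = R[x_{j,a} | 0 <= j <= k, 1 <= a <= 4]  ("block" j is the  *)
(*   j-th tensor factor) by the ideal I_w generated by the balancing          *)
(*   relations  f(block j) - f(block j+1)  for f in R^{s_{i_{j+1}}}.         *)
(*   The element 1 (x) ... (x) 1 is the class of the constant 1; the left    *)
(*   (resp. right) R-action is multiplication by block 0 (resp. block k).    *)
(*   Variable x_{j,a} (a = 1..4) is the index 4*j + (a-1).                    *)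

Notation nv k := (4 * k + 3).+1.

Notation BPoly k := {mpoly R[nv k]}.

Definition sref (i : nat) : 'S_4 := tperm (inord i.-1 : 'I_4) (inord i).

Definition invariant (i : nat) (f : {mpoly R[4]}) : Prop := msym (sref i) f = f.

Definition blk (k j : nat) (f : {mpoly R[4]}) : BPoly k :=
  comp_mpoly [tuple ('X_(inord (4 * j + a)%N) : BPoly k) | a < 4] f.

Definition inI (k : nat) (w : seq nat) (p : BPoly k) : Prop :=
  exists s : seq (BPoly k * nat * {mpoly R[4]}),
    (forall t, t \in s -> ltn t.1.2 k /\ invariant (nth 0%N w t.1.2) t.2) /\
    p = \sum_(t <- s) t.1.1 * (blk k t.1.2 t.2 - blk k t.1.2.+1 t.2).

Definition eqB (k : nat) (w : seq nat) (p q : BPoly k) : Prop := inI k w (p - q).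

(* F (acting on representatives) induces a degree-0 (R,R)-bimodule map
   B_u -> B_v sending 1 (x) ... (x) 1 to 1 (x) ... (x) 1.  Any such map on the
   quotients admits a linear lift F on representatives, and conversely. *)
Definition braid_map (k : nat) (u v : seq nat) (F : BPoly k -> BPoly k) : Prop :=
  (forall (a : R) (p q : BPoly k), F (a *: p + q) = a *: F p + F q) /\
  (forall p, inI k u p -> inI k v (F p)) /\
  (forall r p, eqB k v (F (blk k 0 r * p)) (blk k 0 r * F p)) /\
  (forall r p, eqB k v (F (p * blk k k r)) (F p * blk k k r)) /\
  (forall (d : nat) p, p \is d.-homog ->
     exists q : BPoly k, q \is d.-homog /\ eqB k v (F p) q) /\
  eqB k v (F 1) 1.

(* Id_{B_a} (x) F (x) Id_{B_c} on representatives, where a has length la,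
   c has length lc and F acts on words of length 3.  A monomial of
   R^{(x)(la+3+lc+1)} is split as (blocks < la) * (blocks la..la+3)
   * (blocks > la+3); F is applied to the middle part (shifted to blocks
   0..3) and the result shifted back. *)
Definition idtens (la lc : nat) (F : BPoly 3 -> BPoly 3)
    (p : BPoly (la + 3 + lc)) : BPoly (la + 3 + lc) :=
  let k := (la + 3 + lc)%N in
  \sum_(m <- msupp p)
    p@_m *: ((\prod_(i < nv k | ltn (divn i 4) la) 'X_i ^+ m i)
             * comp_mpoly [tuple ('X_(inord (4 * la + i)%N) : BPoly k) | i < nv 3]
                 (F (\prod_(i < nv 3) 'X_i ^+ m (inord (4 * la + i)%N)))
             * (\prod_(i < nv k | ltn (la + 3)%N (divn i 4)) 'X_i ^+ m i)).

(* The adjacent edge 212321 -- 213231 of Rex(w_0) in S_4: the braid move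
   232 <-> 323 in positions 3..5, i.e. a = 21, c = 1. *)
Definition wA : seq nat := [:: 2; 1; 2; 3; 2; 1]%N.
Definition wB : seq nat := [:: 2; 1; 3; 2; 3; 1]%N.

(* Main.v *)
Require Import Defs.
From mathcomp Require Import all_boot all_algebra all_fingroup.
From mathcomp Require Import Rstruct.
From mathcomp Require Import mpoly.
From Stdlib Require Import Reals.
From mathcomp Require Import ring lra zify.

Set Implicit Arguments.
Unset Strict Implicit.
Unset Printing Implicit Defensive.
Import GRing.Theory.
Local Open Scope ring_scope.

Section Ideal.
Variables (k : nat) (w : seq nat).

Lemma inI0 : inI k w 0.
Proof. by exists [::]; split=> //; rewrite big_nil. Qed.

Lemma inID p q : inI k w p -> inI k w q -> inI k w (p + q).
Proof.
move=> [s1 [H1 ->]] [s2 [H2 ->]]; exists (s1 ++ s2); split; last by rewrite big_cat.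
by move=> t; rewrite mem_cat => /orP[/H1|/H2].
Qed.

Lemma inIMl r p : inI k w p -> inI k w (r * p).
Proof.
move=> [s [H ->]]; exists [seq ((r * t.1.1, t.1.2), t.2) | t <- s]; split.
  by move=> t /mapP [t' /H ht' ->].
by rewrite big_map mulr_sumr; apply: eq_bigr => t _ /=; rewrite mulrA.
Qed.

Lemma inIMr r p : inI k w p -> inI k w (p * r).
Proof. by move=> h; rewrite mulrC; apply: inIMl. Qed.

Lemma inIN p : inI k w p -> inI k w (- p).
Proof. by move=> h; rewrite -mulN1r; apply: inIMl. Qed.

Lemma inIB p q : inI k w p -> inI k w q -> inI k w (p - q).
Proof. by move=> hp hq; apply: inID => //; apply: inIN. Qed.

Lemma inIZ c p : inI k w p -> inI k w (c *: p).
Proof. by move=> h; rewrite -mul_mpolyC; apply: inIMl. Qed.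

Lemma inI_sum (I : Type) (r : seq I) (F : I -> BPoly k) :
  (forall i, inI k w (F i)) -> inI k w (\sum_(i <- r) F i).
Proof.
move=> h; elim: r => [|x r IH]; first by rewrite big_nil; apply: inI0.
by rewrite big_cons; apply: inID.
Qed.

Lemma inI_gen j f : ltn j k -> Defs.invariant (nth 0%N w j) f ->
  inI k w (blk k j f - blk k j.+1 f).
Proof.
move=> hj hf; exists [:: (1, j, f)]; split; last by rewrite big_seq1 mul1r.
by move=> t; rewrite inE => /eqP ->.
Qed.

Lemma inI_trans p q r : inI k w (p - q) -> inI k w (q - r) -> inI k w (p - r).
Proof. move=> h1 h2; have := inID h1 h2; by rewrite addrA subrK. Qed.

Lemma inI_eq p q : p = q -> inI k w p -> inI k w q.
Proof. by move=> ->. Qed.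

End Ideal.

Definition good k u v (F : BPoly k -> BPoly k) :=
  [/\ (forall (a : R) (p q : BPoly k), F (a *: p + q) = a *: F p + F q),
      (forall p, inI k u p -> inI k v (F p)),
      (forall r p, eqB k v (F (blk k 0 r * p)) (blk k 0 r * F p)),
      (forall r p, eqB k v (F (p * blk k k r)) (F p * blk k k r)) &
      (forall (d : nat) p, p \is d.-homog ->
         exists q : BPoly k, q \is d.-homog /\ eqB k v (F p) q)].
Arguments good k u v F : clear implicits.

Lemma braid_good k u v F : braid_map k u v F -> good k u v F.
Proof. by case=> [h1 [h2 [h3 [h4 [h5 _]]]]]; split. Qed.

Section LinF.
Variables (k : nat) (F : BPoly k -> BPoly k).
Hypothesis hF : forall (a : R) (p q : BPoly k), F (a *: p + q) = a *: F p + F q.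

Lemma linD p q : F (p + q) = F p + F q.
Proof. by rewrite -[p]scale1r hF !scale1r. Qed.
Lemma lin0 : F 0 = 0.
Proof. by have := linD 0 0; rewrite addr0 => /(congr1 (fun x => x - F 0)); rewrite subrr addrK. Qed.
Lemma linZ a p : F (a *: p) = a *: F p.
Proof. by rewrite -[a *: p]addr0 hF lin0 addr0. Qed.
Lemma linN p : F (- p) = - F p.
Proof. by rewrite -scaleN1r linZ scaleN1r. Qed.
Lemma linB p q : F (p - q) = F p - F q.
Proof. by rewrite linD linN. Qed.
Lemma lin_sum (I : Type) (r : seq I) (G : I -> BPoly k) :
  F (\sum_(i <- r) G i) = \sum_(i <- r) F (G i).
Proof.
elim: r => [|x r IH]; first by rewrite !big_nil lin0.
by rewrite !big_cons linD IH.
Qed.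
End LinF.

Lemma good_cong k u v F p q : good k u v F -> inI k u (p - q) -> inI k v (F p - F q).
Proof. by case=> hl hi _ _ _ h; rewrite -(linB hl); apply: hi. Qed.

Lemma good_comp k u v x F G : good k u v F -> good k v x G -> good k u x (fun p => G (F p)).
Proof.
move=> hF hG; have [F1 F2 F3 F4 F5] := hF; have [G1 G2 G3 G4 G5] := hG; split.
- by move=> a p q; rewrite F1 G1.
- by move=> p /F2 /G2.
- move=> r p; apply: inI_trans (G3 r (F p)).
  by apply: (good_cong hG); apply: F3.
- move=> r p; apply: inI_trans (G4 r (F p)).
  by apply: (good_cong hG); apply: F4.
- move=> d p /F5 [q1 [hq1 e1]]; have [q2 [hq2 e2]] := G5 d q1 hq1.
  exists q2; split=> //; apply: inI_trans e2.
  by apply: (good_cong hG).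
Qed.

Lemma good_sub k u v F G : good k u v F -> good k u v G -> good k u v (fun p => F p - G p).
Proof.
move=> [F1 F2 F3 F4 F5] [G1 G2 G3 G4 G5]; split.
- by move=> a p q; rewrite F1 G1 scalerBr; ring.
- by move=> p hp; apply: inIB; [apply: F2|apply: G2].
- move=> r p; have := inIB (F3 r p) (G3 r p).
  by apply: inI_eq; rewrite mulrBr; ring.
- move=> r p; have := inIB (F4 r p) (G4 r p).
  by apply: inI_eq; rewrite mulrBl; ring.
- move=> d p hp; have [q1 [hq1 e1]] := F5 d p hp; have [q2 [hq2 e2]] := G5 d p hp.
  exists (q1 - q2); split; first by rewrite rpredB.
  by have := inIB e1 e2; apply: inI_eq; ring.
Qed.

Definition XX k (i : nat) : BPoly k := 'X_(inord i).

Lemma inord_eqE (n x y : nat) : leq x n -> leq y n ->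
  ((inord x : 'I_n.+1) == inord y) = (x == y).
Proof. by move=> hx hy; rewrite -val_eqE /= !inordK. Qed.

Lemma blkX k j (a : 'I_4) : blk k j 'X_a = 'X_(inord (4 * j + a)%N).
Proof. by rewrite /blk comp_mpolyXU -tnth_nth tnth_mktuple. Qed.

Lemma blkXX k j a n : ltn a 4%N -> n == (4 * j + a)%N -> blk k j 'X_(inord a) = XX k n.
Proof. by move=> ha /eqP ->; rewrite blkX inordK. Qed.
Arguments blkXX {k j a n}.

Lemma blkD k j p q : blk k j (p + q) = blk k j p + blk k j q.
Proof. exact: comp_mpolyD. Qed.
Lemma blkM k j p q : blk k j (p * q) = blk k j p * blk k j q.
Proof. exact: rmorphM. Qed.
Lemma blkZ k j c p : blk k j (c *: p) = c *: blk k j p.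
Proof. exact: comp_mpolyZ. Qed.

Lemma msymXU n (s : 'S_n) (i : 'I_n) : msym s ('X_i : {mpoly R[n]}) = 'X_(s i).
Proof.
rewrite msymX; congr 'X_[_]; apply/mnmP => j; rewrite !mnmE.
by rewrite -[in RHS](permKV s j) (inj_eq (@perm_inj _ s)).
Qed.

Definition swapn (i a : nat) : nat :=
  if a == i.-1 then i else if a == i then i.-1 else a.

Lemma srefE i a : ltn 0%N i -> ltn i 4%N -> ltn a 4%N ->
  val (sref i (inord a)) = swapn i a.
Proof.
move=> h0 h4 ha; have hi1 : ltn i.-1 4%N by case: i h0 h4 => // i _ /ltnW.
rewrite /sref /swapn; case: tpermP.
- by move=> /(congr1 val); rewrite /= !inordK // => ->; rewrite eqxx.
- move=> /(congr1 val); rewrite /= !inordK // => ->; rewrite eqxx.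
  by case: ifP => // /eqP; case: i h0 {h4 hi1}.
- move=> hx hy /=; rewrite inordK //; case: eqP => [e|_]; first by case: hx; rewrite e.
  by case: eqP => [e|_] //; case: hy; rewrite e.
Qed.

Lemma sref_inord i a : ltn 0%N i -> ltn i 4%N -> ltn a 4%N ->
  sref i (inord a) = inord (swapn i a).
Proof.
move=> h0 h4 ha; have hi1 : ltn i.-1 4%N by case: i h0 h4 => // i _ /ltnW.
apply: val_inj; rewrite srefE //= inordK // /swapn.
by case: ifP => // _; case: ifP.
Qed.

Lemma swapn_l i : ltn 0%N i -> swapn i i.-1 = i.
Proof. by rewrite /swapn eqxx. Qed.
Lemma swapn_r i : ltn 0%N i -> swapn i i = i.-1.
Proof. by case: i => // i _; rewrite /swapn /= gtn_eqF // eqxx. Qed.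

Section Gens.
Variables (w : seq nat) (j : nat).
Hypotheses (hj : ltn j 3%N) (hi0 : ltn 0%N (nth 0%N w j)) (hi4 : ltn (nth 0%N w j) 4%N).
Let i := nth 0%N w j.
Let hi1 : ltn i.-1 4%N. Proof. by rewrite /i; case: (nth 0%N w j) hi0 hi4 => // i0 _ /ltnW. Qed.

Lemma gen_fix a n m : ltn a 4%N -> swapn i a == a ->
  n == (4 * j + a)%N -> m == (4 * j.+1 + a)%N -> inI 3 w (XX 3 n - XX 3 m).
Proof.
move=> ha hs hn hm; have := @inI_gen 3 w j 'X_(inord a) hj.
rewrite /Defs.invariant msymXU sref_inord // (eqP hs) => /(_ erefl).
by rewrite (blkXX ha hn) (blkXX ha hm).
Qed.

Lemma gen_sum n1 n2 m1 m2 :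
  n1 == (4 * j + i.-1)%N -> n2 == (4 * j + i)%N ->
  m1 == (4 * j.+1 + i.-1)%N -> m2 == (4 * j.+1 + i)%N ->
  inI 3 w (XX 3 n1 + XX 3 n2 - XX 3 m1 - XX 3 m2).
Proof.
move=> h1 h2 h3 h4.
have := @inI_gen 3 w j ('X_(inord i.-1) + 'X_(inord i)) hj.
rewrite /Defs.invariant msymD !msymXU !sref_inord // swapn_l // swapn_r // addrC.
move=> /(_ erefl); rewrite !blkD (blkXX hi1 h1) (blkXX hi4 h2).
rewrite (blkXX hi1 h3) (blkXX hi4 h4).
by apply: inI_eq; ring.
Qed.

Lemma gen_prod n1 n2 m1 m2 :
  n1 == (4 * j + i.-1)%N -> n2 == (4 * j + i)%N ->
  m1 == (4 * j.+1 + i.-1)%N -> m2 == (4 * j.+1 + i)%N ->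
  inI 3 w (XX 3 n1 * XX 3 n2 - XX 3 m1 * XX 3 m2).
Proof.
move=> h1 h2 h3 h4.
have := @inI_gen 3 w j ('X_(inord i.-1) * 'X_(inord i)) hj.
rewrite /Defs.invariant msymM !msymXU !sref_inord // swapn_l // swapn_r // mulrC.
move=> /(_ erefl); rewrite !blkM (blkXX hi1 h1) (blkXX hi4 h2).
by rewrite (blkXX hi1 h3) (blkXX hi4 h4).
Qed.
End Gens.

Lemma mnm1_inj n (i j : 'I_n) : (U_(i)%MM == U_(j)%MM :> 'X_{1..n}) = (i == j).
Proof.
apply/eqP/eqP => [/mnmP /(_ j)|->//]; rewrite !mnm1E eqxx.
by case: eqP.
Qed.

Lemma homog1E n (q : {mpoly R[n]}) : q \is 1.-homog ->
  q = \sum_(i < n) q@_(U_(i))%MM *: 'X_i.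
Proof.
move=> hq; apply/mpolyP => m; rewrite raddf_sum /=.
under eq_bigr => i _ do rewrite mcoeffZ mcoeffX.
case: (boolP (mdeg m == 1%N)) => [/mdeg1P [i /eqP ->]|hm].
  rewrite (bigD1 i) //= eqxx mulr1 big1 ?addr0 // => j hj.
  by rewrite mnm1_inj (negbTE hj) mulr0.
rewrite (dhomog_nemf_coeff hq hm) big1 // => i _.
case: eqP => [hi|]; last by rewrite mulr0.
by move: hm; rewrite -hi mdeg1.
Qed.

Lemma sum16 (V : nmodType) (F : nat -> V) : \sum_(i < 16) F i =
  F 0%N + F 1%N + F 2%N + F 3%N + F 4%N + F 5%N + F 6%N + F 7%N + F 8%N + F 9%N
  + F 10%N + F 11%N + F 12%N + F 13%N + F 14%N + F 15%N.
Proof. by rewrite !big_ord_recr big_ord0 /= add0r. Qed.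


Lemma compcomp n m k (f : {mpoly R[n]}) (T1 : n.-tuple {mpoly R[m]}) (T2 : m.-tuple {mpoly R[k]}) :
  (f \mPo T1) \mPo T2 = f \mPo [tuple (tnth T1 i \mPo T2) | i < n].
Proof.
elim/mpolyind: f => [|c mm p _ _ IH]; first by rewrite !comp_mpoly0.
rewrite !comp_mpolyD !comp_mpolyZ IH !comp_mpolyX rmorph_prod /=; congr (_ *: _ + _).
by apply: eq_bigr => i _; rewrite rmorphXn /= tnth_mktuple.
Qed.

Definition evT (tab : nat -> nat) : (nv 3).-tuple {mpoly R[4]} :=
  [tuple ('X_(inord (tab i)) : {mpoly R[4]}) | i < nv 3].

Lemma evX tab i : ltn i 16%N -> XX 3 i \mPo evT tab = 'X_(inord (tab i)).
Proof. by move=> hi; rewrite /XX comp_mpolyXU -tnth_nth tnth_mktuple inordK. Qed.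

Definition Bev (tab : nat -> nat) (j : nat) : 4.-tuple {mpoly R[4]} :=
  [tuple ('X_(inord (tab (4 * j + a)%N)) : {mpoly R[4]}) | a < 4].

Lemma blk_ev tab j f : leq j 3%N -> blk 3 j f \mPo evT tab = f \mPo Bev tab j.
Proof.
move=> hj; rewrite /blk compcomp; congr (f \mPo _); apply: eq_from_tnth => a.
rewrite !tnth_mktuple evX //.
by have := ltn_ord a; case: j hj => [|[|[|[|j]]]] //= _; case: (nat_of_ord a) => [|[|[|[|]]]].
Qed.

Definition ev_ok (tab : nat -> nat) (w : seq nat) : bool :=
  all (fun j => [&& ltn 0%N (nth 0%N w j), ltn (nth 0%N w j) 4%N &
     all (fun a => tab (4 * j.+1 + a)%N == tab (4 * j + a)%N) (iota 0%N 4%N) ||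
     all (fun a => tab (4 * j.+1 + a)%N == tab (4 * j + swapn (nth 0%N w j) a)%N) (iota 0%N 4%N)])
   (iota 0%N 3%N).

Lemma ev_kill tab w p : ev_ok tab w -> inI 3 w p -> p \mPo evT tab = 0.
Proof.
move=> /allP hok [s [hs ->]]; rewrite raddf_sum /= big1_seq // => t /andP [_ /hs [hj hf]].
rewrite rmorphM rmorphB /= !blk_ev //; last by apply: ltnW.
suff -> : t.2 \mPo Bev tab t.1.2.+1 = t.2 \mPo Bev tab t.1.2 by rewrite subrr mulr0.
have := hok t.1.2; rewrite mem_iota => /(_ hj) /and3P [h0 h4 /orP [/allP H|/allP H]].
  congr (_ \mPo _); apply: eq_from_tnth => a; rewrite !tnth_mktuple.
  by rewrite (eqP (H a _)) // mem_iota ltn_ord.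
rewrite -[in RHS]hf msym_mPo; congr (_ \mPo _); apply: eq_from_tnth => a.
rewrite !tnth_mktuple (eqP (H a _)) ?mem_iota ?ltn_ord //=.
by rewrite -[in RHS](inord_val a) srefE //; apply: ltn_ord.
Qed.

Lemma ev_zero w tab (q L Rr : BPoly 3) : ev_ok tab w -> inI 3 w (L * q - q * Rr) ->
  ((L \mPo evT tab) - (Rr \mPo evT tab)) != 0 -> q \mPo evT tab = 0.
Proof.
move=> hok hI hnz; have := ev_kill hok hI; rewrite rmorphB !rmorphM /= => e.
have : ((L \mPo evT tab) - (Rr \mPo evT tab)) * (q \mPo evT tab) = 0.
  by rewrite -e; ring.
by move/eqP; rewrite mulf_eq0 (negbTE hnz) => /eqP.
Qed.

Lemma ev_coef tab (c : nat -> R) b : ltn b 4%N ->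
  all (fun i => ltn (tab i) 4%N) (iota 0%N 16%N) ->
  (\sum_(i < 16) c i *: XX 3 i) \mPo evT tab = 0 ->
  \sum_(i < 16) c i * (tab i == b)%:R = 0.
Proof.
move=> hb /allP htab; rewrite raddf_sum /= => /(congr1 (mcoeff (U_(inord b))%MM)).
rewrite raddf_sum mcoeff0 /= => e; rewrite -[RHS]e; apply: eq_bigr => i _.
rewrite comp_mpolyZ evX; last by apply: ltn_ord.
rewrite (mcoeffZ (c i)) mcoeffXU inord_eqE //; first by apply: htab; rewrite mem_iota /=; apply: ltn_ord.
Qed.

Lemma homog16 (q : BPoly 3) : q \is 1.-homog ->
  q = \sum_(i < 16) q@_(U_(inord i))%MM *: XX 3 i.
Proof.
move=> /homog1E {1}->; apply: eq_bigr => i _.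
by rewrite /XX inord_val.
Qed.

Definition tab_323_0 (i : nat) : nat := nth 0%N [:: 0%N; 1%N; 2%N; 3%N; 0%N; 1%N; 2%N; 3%N; 0%N; 1%N; 2%N; 3%N; 0%N; 1%N; 3%N; 2%N] i.
Definition tab_323_1 (i : nat) : nat := nth 0%N [:: 0%N; 1%N; 2%N; 3%N; 0%N; 1%N; 2%N; 3%N; 0%N; 2%N; 1%N; 3%N; 0%N; 2%N; 3%N; 1%N] i.
Definition tab_323_2 (i : nat) : nat := nth 0%N [:: 0%N; 1%N; 2%N; 3%N; 0%N; 1%N; 3%N; 2%N; 0%N; 1%N; 3%N; 2%N; 0%N; 1%N; 3%N; 2%N] i.
Definition tab_323_3 (i : nat) : nat := nth 0%N [:: 0%N; 1%N; 2%N; 3%N; 0%N; 1%N; 3%N; 2%N; 0%N; 3%N; 1%N; 2%N; 0%N; 3%N; 1%N; 2%N] i.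
Definition tab_323_4 (i : nat) : nat := nth 0%N [:: 0%N; 1%N; 2%N; 3%N; 0%N; 1%N; 3%N; 2%N; 0%N; 3%N; 1%N; 2%N; 0%N; 3%N; 2%N; 1%N] i.
Lemma deg1_323 (q : BPoly 3) : q \is 1.-homog ->
  inI 3 [:: 3%N; 2%N; 3%N] (blk 3 0 ('X_(inord 1) + 'X_(inord 2)) * q - q * blk 3 3 ('X_(inord 1) + 'X_(inord 2))) -> inI 3 [:: 3%N; 2%N; 3%N] q.
Proof.
move=> hq hI; pose c := fun i : nat => q@_(U_(inord i))%MM.
have qE : q = \sum_(i < 16) c i *: XX 3 i by apply: homog16.
clearbody c.
have hL : blk 3 0 ('X_(inord 1) + 'X_(inord 2)) = XX 3 1 + XX 3 2 by rewrite !blkD !blkX !inordK.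
have hR : blk 3 3 ('X_(inord 1) + 'X_(inord 2)) = XX 3 13 + XX 3 14 by rewrite !blkD !blkX !inordK.
have e0 : (\sum_(i < 16) c i *: XX 3 i) \mPo evT tab_323_0 = 0.
  rewrite -qE; apply: (ev_zero (w := [:: 3%N; 2%N; 3%N]) _ hI) => //.
  rewrite hL hR !comp_mpolyD !evX //; apply/eqP => /(congr1 (mcoeff (U_(inord 2))%MM)).
  rewrite mcoeff0 !mcoeffB !mcoeffD !mcoeffXU !inord_eqE //=; lra.
have e1 : (\sum_(i < 16) c i *: XX 3 i) \mPo evT tab_323_1 = 0.
  rewrite -qE; apply: (ev_zero (w := [:: 3%N; 2%N; 3%N]) _ hI) => //.
  rewrite hL hR !comp_mpolyD !evX //; apply/eqP => /(congr1 (mcoeff (U_(inord 1))%MM)).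
  rewrite mcoeff0 !mcoeffB !mcoeffD !mcoeffXU !inord_eqE //=; lra.
have e2 : (\sum_(i < 16) c i *: XX 3 i) \mPo evT tab_323_2 = 0.
  rewrite -qE; apply: (ev_zero (w := [:: 3%N; 2%N; 3%N]) _ hI) => //.
  rewrite hL hR !comp_mpolyD !evX //; apply/eqP => /(congr1 (mcoeff (U_(inord 2))%MM)).
  rewrite mcoeff0 !mcoeffB !mcoeffD !mcoeffXU !inord_eqE //=; lra.
have e3 : (\sum_(i < 16) c i *: XX 3 i) \mPo evT tab_323_3 = 0.
  rewrite -qE; apply: (ev_zero (w := [:: 3%N; 2%N; 3%N]) _ hI) => //.
  rewrite hL hR !comp_mpolyD !evX //; apply/eqP => /(congr1 (mcoeff (U_(inord 2))%MM)).
  rewrite mcoeff0 !mcoeffB !mcoeffD !mcoeffXU !inord_eqE //=; lra.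
have e4 : (\sum_(i < 16) c i *: XX 3 i) \mPo evT tab_323_4 = 0.
  rewrite -qE; apply: (ev_zero (w := [:: 3%N; 2%N; 3%N]) _ hI) => //.
  rewrite hL hR !comp_mpolyD !evX //; apply/eqP => /(congr1 (mcoeff (U_(inord 1))%MM)).
  rewrite mcoeff0 !mcoeffB !mcoeffD !mcoeffXU !inord_eqE //=; lra.
have E0 : c 0%N + c 4%N + c 8%N + c 12%N = 0.
  have := ev_coef (tab := tab_323_0) (c := c) (b := 0%N) isT isT e0; rewrite (sum16 (fun i => c i * (tab_323_0 i == 0%N)%:R)) /=; lra.
have E1 : c 1%N + c 5%N + c 9%N + c 13%N = 0.
  have := ev_coef (tab := tab_323_0) (c := c) (b := 1%N) isT isT e0; rewrite (sum16 (fun i => c i * (tab_323_0 i == 1%N)%:R)) /=; lra.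
have E2 : c 2%N + c 6%N + c 10%N + c 15%N = 0.
  have := ev_coef (tab := tab_323_0) (c := c) (b := 2%N) isT isT e0; rewrite (sum16 (fun i => c i * (tab_323_0 i == 2%N)%:R)) /=; lra.
have E3 : c 3%N + c 7%N + c 11%N + c 14%N = 0.
  have := ev_coef (tab := tab_323_0) (c := c) (b := 3%N) isT isT e0; rewrite (sum16 (fun i => c i * (tab_323_0 i == 3%N)%:R)) /=; lra.
have E4 : c 1%N + c 5%N + c 10%N + c 15%N = 0.
  have := ev_coef (tab := tab_323_1) (c := c) (b := 1%N) isT isT e1; rewrite (sum16 (fun i => c i * (tab_323_1 i == 1%N)%:R)) /=; lra.
have E5 : c 2%N + c 7%N + c 11%N + c 15%N = 0.
  have := ev_coef (tab := tab_323_2) (c := c) (b := 2%N) isT isT e2; rewrite (sum16 (fun i => c i * (tab_323_2 i == 2%N)%:R)) /=; lra.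
have E6 : c 1%N + c 5%N + c 10%N + c 14%N = 0.
  have := ev_coef (tab := tab_323_3) (c := c) (b := 1%N) isT isT e3; rewrite (sum16 (fun i => c i * (tab_323_3 i == 1%N)%:R)) /=; lra.
rewrite qE (sum16 (fun i => c i *: XX 3 i)) -!mul_mpolyC.
have -> : (c 0%N)%:MP * XX 3 0 + (c 1%N)%:MP * XX 3 1 + (c 2%N)%:MP * XX 3 2 + (c 3%N)%:MP * XX 3 3 + (c 4%N)%:MP * XX 3 4 + (c 5%N)%:MP * XX 3 5 + (c 6%N)%:MP * XX 3 6 + (c 7%N)%:MP * XX 3 7 + (c 8%N)%:MP * XX 3 8 + (c 9%N)%:MP * XX 3 9 + (c 10%N)%:MP * XX 3 10 + (c 11%N)%:MP * XX 3 11 + (c 12%N)%:MP * XX 3 12 + (c 13%N)%:MP * XX 3 13 + (c 14%N)%:MP * XX 3 14 + (c 15%N)%:MP * XX 3 15 =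
  (- c 4%N - c 8%N - c 12%N)%:MP * (XX 3 0 - XX 3 4) + (- c 5%N - c 10%N - c 15%N)%:MP * (XX 3 1 - XX 3 5) + (- c 7%N - c 11%N - c 15%N)%:MP * (XX 3 2 + XX 3 3 - XX 3 6 - XX 3 7) + (- c 8%N - c 12%N)%:MP * (XX 3 4 - XX 3 8) + (- c 11%N - c 15%N)%:MP * (XX 3 7 - XX 3 11) + (- c 10%N - c 15%N)%:MP * (XX 3 5 + XX 3 6 - XX 3 9 - XX 3 10) + (- c 12%N)%:MP * (XX 3 8 - XX 3 12) + (- c 13%N)%:MP * (XX 3 9 - XX 3 13) + (- c 15%N)%:MP * (XX 3 10 + XX 3 11 - XX 3 14 - XX 3 15) + (c 0%N + c 4%N + c 8%N + c 12%N)%:MP * (XX 3 0) + (c 1%N + c 5%N + c 9%N + c 13%N)%:MP * (XX 3 9) + (c 2%N + c 6%N + c 10%N + c 15%N)%:MP * (XX 3 6) + (c 3%N + c 7%N + c 11%N + c 14%N)%:MP * (XX 3 3) + (c 1%N + c 5%N + c 10%N + c 15%N)%:MP * (XX 3 1 + XX 3 3 - XX 3 9 - XX 3 14) + (c 2%N + c 7%N + c 11%N + c 15%N)%:MP * (XX 3 2 - XX 3 6) + (c 1%N + c 5%N + c 10%N + c 14%N)%:MP * (- XX 3 3 + XX 3 14) by ring.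
apply: inID; last (by rewrite E6 mpolyC0 mul0r; apply: inI0).
apply: inID; last (by rewrite E5 mpolyC0 mul0r; apply: inI0).
apply: inID; last (by rewrite E4 mpolyC0 mul0r; apply: inI0).
apply: inID; last (by rewrite E3 mpolyC0 mul0r; apply: inI0).
apply: inID; last (by rewrite E2 mpolyC0 mul0r; apply: inI0).
apply: inID; last (by rewrite E1 mpolyC0 mul0r; apply: inI0).
apply: inID; last (by rewrite E0 mpolyC0 mul0r; apply: inI0).
apply: inID; last (by apply: inIMl; apply: (@gen_sum [:: 3%N; 2%N; 3%N] 2%N isT isT isT 10%N 11%N 14%N 15%N isT isT isT isT)).
apply: inID; last (by apply: inIMl; apply: (@gen_fix [:: 3%N; 2%N; 3%N] 2%N isT isT isT 1%N 9%N 13%N isT isT isT isT)).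
apply: inID; last (by apply: inIMl; apply: (@gen_fix [:: 3%N; 2%N; 3%N] 2%N isT isT isT 0%N 8%N 12%N isT isT isT isT)).
apply: inID; last (by apply: inIMl; apply: (@gen_sum [:: 3%N; 2%N; 3%N] 1%N isT isT isT 5%N 6%N 9%N 10%N isT isT isT isT)).
apply: inID; last (by apply: inIMl; apply: (@gen_fix [:: 3%N; 2%N; 3%N] 1%N isT isT isT 3%N 7%N 11%N isT isT isT isT)).
apply: inID; last (by apply: inIMl; apply: (@gen_fix [:: 3%N; 2%N; 3%N] 1%N isT isT isT 0%N 4%N 8%N isT isT isT isT)).
apply: inID; last (by apply: inIMl; apply: (@gen_sum [:: 3%N; 2%N; 3%N] 0%N isT isT isT 2%N 3%N 6%N 7%N isT isT isT isT)).
apply: inID; last (by apply: inIMl; apply: (@gen_fix [:: 3%N; 2%N; 3%N] 0%N isT isT isT 1%N 1%N 5%N isT isT isT isT)).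
by apply: inIMl; apply: (@gen_fix [:: 3%N; 2%N; 3%N] 0%N isT isT isT 0%N 0%N 4%N isT isT isT isT).
Qed.

Definition tab_232_0 (i : nat) : nat := nth 0%N [:: 0%N; 1%N; 2%N; 3%N; 0%N; 1%N; 2%N; 3%N; 0%N; 1%N; 2%N; 3%N; 0%N; 2%N; 1%N; 3%N] i.
Definition tab_232_1 (i : nat) : nat := nth 0%N [:: 0%N; 1%N; 2%N; 3%N; 0%N; 1%N; 2%N; 3%N; 0%N; 1%N; 3%N; 2%N; 0%N; 3%N; 1%N; 2%N] i.
Definition tab_232_2 (i : nat) : nat := nth 0%N [:: 0%N; 1%N; 2%N; 3%N; 0%N; 2%N; 1%N; 3%N; 0%N; 2%N; 1%N; 3%N; 0%N; 2%N; 1%N; 3%N] i.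
Definition tab_232_3 (i : nat) : nat := nth 0%N [:: 0%N; 1%N; 2%N; 3%N; 0%N; 2%N; 1%N; 3%N; 0%N; 2%N; 3%N; 1%N; 0%N; 2%N; 3%N; 1%N] i.
Definition tab_232_4 (i : nat) : nat := nth 0%N [:: 0%N; 1%N; 2%N; 3%N; 0%N; 2%N; 1%N; 3%N; 0%N; 2%N; 3%N; 1%N; 0%N; 3%N; 2%N; 1%N] i.
Lemma deg1_232 (q : BPoly 3) : q \is 1.-homog ->
  inI 3 [:: 2%N; 3%N; 2%N] (blk 3 0 ('X_(inord 1) + 'X_(inord 1) + 'X_(inord 2) + 'X_(inord 3)) * q - q * blk 3 3 ('X_(inord 1) + 'X_(inord 1) + 'X_(inord 2) + 'X_(inord 3))) -> inI 3 [:: 2%N; 3%N; 2%N] q.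
Proof.
move=> hq hI; pose c := fun i : nat => q@_(U_(inord i))%MM.
have qE : q = \sum_(i < 16) c i *: XX 3 i by apply: homog16.
clearbody c.
have hL : blk 3 0 ('X_(inord 1) + 'X_(inord 1) + 'X_(inord 2) + 'X_(inord 3)) = XX 3 1 + XX 3 1 + XX 3 2 + XX 3 3 by rewrite !blkD !blkX !inordK.
have hR : blk 3 3 ('X_(inord 1) + 'X_(inord 1) + 'X_(inord 2) + 'X_(inord 3)) = XX 3 13 + XX 3 13 + XX 3 14 + XX 3 15 by rewrite !blkD !blkX !inordK.
have e0 : (\sum_(i < 16) c i *: XX 3 i) \mPo evT tab_232_0 = 0.
  rewrite -qE; apply: (ev_zero (w := [:: 2%N; 3%N; 2%N]) _ hI) => //.
  rewrite hL hR !comp_mpolyD !evX //; apply/eqP => /(congr1 (mcoeff (U_(inord 1))%MM)).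
  rewrite mcoeff0 !mcoeffB !mcoeffD !mcoeffXU !inord_eqE //=; lra.
have e1 : (\sum_(i < 16) c i *: XX 3 i) \mPo evT tab_232_1 = 0.
  rewrite -qE; apply: (ev_zero (w := [:: 2%N; 3%N; 2%N]) _ hI) => //.
  rewrite hL hR !comp_mpolyD !evX //; apply/eqP => /(congr1 (mcoeff (U_(inord 1))%MM)).
  rewrite mcoeff0 !mcoeffB !mcoeffD !mcoeffXU !inord_eqE //=; lra.
have e2 : (\sum_(i < 16) c i *: XX 3 i) \mPo evT tab_232_2 = 0.
  rewrite -qE; apply: (ev_zero (w := [:: 2%N; 3%N; 2%N]) _ hI) => //.
  rewrite hL hR !comp_mpolyD !evX //; apply/eqP => /(congr1 (mcoeff (U_(inord 1))%MM)).
  rewrite mcoeff0 !mcoeffB !mcoeffD !mcoeffXU !inord_eqE //=; lra.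
have e3 : (\sum_(i < 16) c i *: XX 3 i) \mPo evT tab_232_3 = 0.
  rewrite -qE; apply: (ev_zero (w := [:: 2%N; 3%N; 2%N]) _ hI) => //.
  rewrite hL hR !comp_mpolyD !evX //; apply/eqP => /(congr1 (mcoeff (U_(inord 1))%MM)).
  rewrite mcoeff0 !mcoeffB !mcoeffD !mcoeffXU !inord_eqE //=; lra.
have e4 : (\sum_(i < 16) c i *: XX 3 i) \mPo evT tab_232_4 = 0.
  rewrite -qE; apply: (ev_zero (w := [:: 2%N; 3%N; 2%N]) _ hI) => //.
  rewrite hL hR !comp_mpolyD !evX //; apply/eqP => /(congr1 (mcoeff (U_(inord 1))%MM)).
  rewrite mcoeff0 !mcoeffB !mcoeffD !mcoeffXU !inord_eqE //=; lra.
have E0 : c 0%N + c 4%N + c 8%N + c 12%N = 0.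
  have := ev_coef (tab := tab_232_0) (c := c) (b := 0%N) isT isT e0; rewrite (sum16 (fun i => c i * (tab_232_0 i == 0%N)%:R)) /=; lra.
have E1 : c 1%N + c 5%N + c 9%N + c 14%N = 0.
  have := ev_coef (tab := tab_232_0) (c := c) (b := 1%N) isT isT e0; rewrite (sum16 (fun i => c i * (tab_232_0 i == 1%N)%:R)) /=; lra.
have E2 : c 2%N + c 6%N + c 10%N + c 13%N = 0.
  have := ev_coef (tab := tab_232_0) (c := c) (b := 2%N) isT isT e0; rewrite (sum16 (fun i => c i * (tab_232_0 i == 2%N)%:R)) /=; lra.
have E3 : c 3%N + c 7%N + c 11%N + c 15%N = 0.
  have := ev_coef (tab := tab_232_0) (c := c) (b := 3%N) isT isT e0; rewrite (sum16 (fun i => c i * (tab_232_0 i == 3%N)%:R)) /=; lra.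
have E4 : c 2%N + c 6%N + c 11%N + c 15%N = 0.
  have := ev_coef (tab := tab_232_1) (c := c) (b := 2%N) isT isT e1; rewrite (sum16 (fun i => c i * (tab_232_1 i == 2%N)%:R)) /=; lra.
have E5 : c 1%N + c 6%N + c 10%N + c 14%N = 0.
  have := ev_coef (tab := tab_232_2) (c := c) (b := 1%N) isT isT e2; rewrite (sum16 (fun i => c i * (tab_232_2 i == 1%N)%:R)) /=; lra.
have E6 : c 1%N + c 6%N + c 11%N + c 15%N = 0.
  have := ev_coef (tab := tab_232_3) (c := c) (b := 1%N) isT isT e3; rewrite (sum16 (fun i => c i * (tab_232_3 i == 1%N)%:R)) /=; lra.
rewrite qE (sum16 (fun i => c i *: XX 3 i)) -!mul_mpolyC.
have -> : (c 0%N)%:MP * XX 3 0 + (c 1%N)%:MP * XX 3 1 + (c 2%N)%:MP * XX 3 2 + (c 3%N)%:MP * XX 3 3 + (c 4%N)%:MP * XX 3 4 + (c 5%N)%:MP * XX 3 5 + (c 6%N)%:MP * XX 3 6 + (c 7%N)%:MP * XX 3 7 + (c 8%N)%:MP * XX 3 8 + (c 9%N)%:MP * XX 3 9 + (c 10%N)%:MP * XX 3 10 + (c 11%N)%:MP * XX 3 11 + (c 12%N)%:MP * XX 3 12 + (c 13%N)%:MP * XX 3 13 + (c 14%N)%:MP * XX 3 14 + (c 15%N)%:MP * XX 3 15 =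
  (- c 4%N - c 8%N - c 12%N)%:MP * (XX 3 0 - XX 3 4) + (- c 7%N - c 11%N - c 15%N)%:MP * (XX 3 3 - XX 3 7) + (- c 6%N - c 11%N - c 15%N)%:MP * (XX 3 1 + XX 3 2 - XX 3 5 - XX 3 6) + (- c 8%N - c 12%N)%:MP * (XX 3 4 - XX 3 8) + (- c 9%N - c 14%N)%:MP * (XX 3 5 - XX 3 9) + (- c 11%N - c 15%N)%:MP * (XX 3 6 + XX 3 7 - XX 3 10 - XX 3 11) + (- c 12%N)%:MP * (XX 3 8 - XX 3 12) + (- c 15%N)%:MP * (XX 3 11 - XX 3 15) + (- c 14%N)%:MP * (XX 3 9 + XX 3 10 - XX 3 13 - XX 3 14) + (c 0%N + c 4%N + c 8%N + c 12%N)%:MP * (XX 3 0) + (c 1%N + c 5%N + c 9%N + c 14%N)%:MP * (XX 3 5) + (c 2%N + c 6%N + c 10%N + c 13%N)%:MP * (XX 3 13) + (c 3%N + c 7%N + c 11%N + c 15%N)%:MP * (XX 3 3) + (c 2%N + c 6%N + c 11%N + c 15%N)%:MP * (XX 3 2 - XX 3 13) + (c 1%N + c 6%N + c 10%N + c 14%N)%:MP * (XX 3 10 - XX 3 13) + (c 1%N + c 6%N + c 11%N + c 15%N)%:MP * (XX 3 1 - XX 3 5 - XX 3 10 + XX 3 13) by ring.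
apply: inID; last (by rewrite E6 mpolyC0 mul0r; apply: inI0).
apply: inID; last (by rewrite E5 mpolyC0 mul0r; apply: inI0).
apply: inID; last (by rewrite E4 mpolyC0 mul0r; apply: inI0).
apply: inID; last (by rewrite E3 mpolyC0 mul0r; apply: inI0).
apply: inID; last (by rewrite E2 mpolyC0 mul0r; apply: inI0).
apply: inID; last (by rewrite E1 mpolyC0 mul0r; apply: inI0).
apply: inID; last (by rewrite E0 mpolyC0 mul0r; apply: inI0).
apply: inID; last (by apply: inIMl; apply: (@gen_sum [:: 2%N; 3%N; 2%N] 2%N isT isT isT 9%N 10%N 13%N 14%N isT isT isT isT)).
apply: inID; last (by apply: inIMl; apply: (@gen_fix [:: 2%N; 3%N; 2%N] 2%N isT isT isT 3%N 11%N 15%N isT isT isT isT)).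
apply: inID; last (by apply: inIMl; apply: (@gen_fix [:: 2%N; 3%N; 2%N] 2%N isT isT isT 0%N 8%N 12%N isT isT isT isT)).
apply: inID; last (by apply: inIMl; apply: (@gen_sum [:: 2%N; 3%N; 2%N] 1%N isT isT isT 6%N 7%N 10%N 11%N isT isT isT isT)).
apply: inID; last (by apply: inIMl; apply: (@gen_fix [:: 2%N; 3%N; 2%N] 1%N isT isT isT 1%N 5%N 9%N isT isT isT isT)).
apply: inID; last (by apply: inIMl; apply: (@gen_fix [:: 2%N; 3%N; 2%N] 1%N isT isT isT 0%N 4%N 8%N isT isT isT isT)).
apply: inID; last (by apply: inIMl; apply: (@gen_sum [:: 2%N; 3%N; 2%N] 0%N isT isT isT 1%N 2%N 5%N 6%N isT isT isT isT)).
apply: inID; last (by apply: inIMl; apply: (@gen_fix [:: 2%N; 3%N; 2%N] 0%N isT isT isT 3%N 3%N 7%N isT isT isT isT)).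
by apply: inIMl; apply: (@gen_fix [:: 2%N; 3%N; 2%N] 0%N isT isT isT 0%N 0%N 4%N isT isT isT isT).
Qed.

Definition outer (n : nat) : bool := ltn n 4%N || (leq 12%N n && ltn n 16%N).

Section Main.
Variables (u v : seq nat) (G : BPoly 3 -> BPoly 3).
Hypothesis hG : good 3 u v G.
Hypothesis hG1 : inI 3 v (G 1).

Definition ZG p := inI 3 v (G p).

Let G1 : forall (a : R) (p q : BPoly 3), G (a *: p + q) = a *: G p + G q.
Proof. by case: hG. Qed.

Lemma Z0 : ZG 0.
Proof. by rewrite /ZG (lin0 G1); apply: inI0. Qed.
Lemma ZD p q : ZG p -> ZG q -> ZG (p + q).
Proof. by rewrite /ZG (linD G1); apply: inID. Qed.
Lemma ZN p : ZG p -> ZG (- p).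
Proof. by rewrite /ZG (linN G1); apply: inIN. Qed.
Lemma ZB p q : ZG p -> ZG q -> ZG (p - q).
Proof. by move=> hp hq; apply: ZD => //; apply: ZN. Qed.
Lemma ZZ c p : ZG p -> ZG (c *: p).
Proof. by rewrite /ZG (linZ G1); apply: inIZ. Qed.
Lemma Zsum (I : Type) (r : seq I) (F : I -> BPoly 3) :
  (forall i, ZG (F i)) -> ZG (\sum_(i <- r) F i).
Proof.
move=> h; elim: r => [|x r IH]; first by rewrite big_nil; apply: Z0.
by rewrite big_cons; apply: ZD.
Qed.

Lemma ZI p : inI 3 u p -> ZG p.
Proof. by case: hG => _ h2 _ _ _; apply: h2. Qed.

Lemma Zcong p q : inI 3 u (p - q) -> ZG q -> ZG p.
Proof.
move=> h hq; have := inID (good_cong hG h) hq.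
by rewrite /ZG subrK.
Qed.

Lemma Zl r p : ZG p -> ZG (blk 3 0 r * p).
Proof.
move=> hp; case: hG => _ _ h3 _ _; have := inID (h3 r p) (inIMl (blk 3 0 r) hp).
by rewrite /ZG subrK.
Qed.

Lemma Zr r p : ZG p -> ZG (p * blk 3 3 r).
Proof.
move=> hp; case: hG => _ _ _ h4 _; have := inID (h4 r p) (inIMr (blk 3 3 r) hp).
by rewrite /ZG subrK.
Qed.

Lemma ZX p n : outer n -> ZG p -> ZG (p * XX 3 n).
Proof.
move=> /orP [hn|/andP [h1 h2]] hp.
  rewrite mulrC -(blkXX (j := 0%N) hn); first by apply: Zl.
  by change (n == addn (muln 4 0) n); rewrite muln0 add0n.
have ha : ltn (subn n 12) 4%N by move: h1 h2; rewrite /ltn /=; lia.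
rewrite -(blkXX (j := 3%N) ha); first by apply: Zr.
by change (n == addn (muln 4 3) (subn n 12)); rewrite subnKC.
Qed.

Lemma Z1 : ZG 1.
Proof. exact: hG1. Qed.

Lemma ZXX a b : outer a -> outer b -> ZG (XX 3 a * XX 3 b).
Proof. by move=> ha hb; rewrite -[XX 3 a]mul1r; apply: ZX => //; apply: ZX => //; apply: Z1. Qed.

Lemma ZXU p U a : outer a -> ZG (p * U) -> ZG (p * U * XX 3 a).
Proof. by move=> ha h; apply: ZX. Qed.

Lemma Z_all (U : BPoly 3) :
  (forall p, ZG p -> ZG (p * U) -> forall i, ltn i 16%N -> ZG (p * XX 3 i) /\ ZG (p * U * XX 3 i)) ->
  ZG U -> forall p, ZG p.
Proof.
move=> hstep hU.
pose P q := ZG q /\ ZG (q * U).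
have P1 : P 1 by split; [apply: Z1 | rewrite mul1r].
have PX : forall q (i : 'I_16), P q -> P (q * 'X_i).
  move=> q i [h1 h2]; have := hstep q h1 h2 i (ltn_ord i).
  rewrite /XX inord_val => -[h3 h4]; split => //.
  by rewrite mulrAC.
have PXn : forall q (i : 'I_16) k, P q -> P (q * 'X_i ^+ k).
  move=> q i; elim=> [|k IH] hq; first by rewrite expr0 mulr1.
  by rewrite exprSr mulrA; apply: PX; apply: IH.
have Pm : forall m : 'X_{1..16}, P 'X_[m].
  move=> m; rewrite mpolyXE_id.
  elim: (index_enum _) => [|i r IH]; first by rewrite big_nil.
  by rewrite big_cons mulrC; apply: PXn.
move=> p; rewrite [p]mpolyE; apply: Zsum => m; apply: ZZ.
by case: (Pm m).
Qed.

Lemma Zkey (U : BPoly 3) (A : {mpoly R[4]}) : U \is 1.-homog ->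
  ZG (blk 3 0 A * U - U * blk 3 3 A) ->
  (forall q : BPoly 3, q \is 1.-homog -> inI 3 v (blk 3 0 A * q - q * blk 3 3 A) -> inI 3 v q) ->
  ZG U.
Proof.
move=> hU hZ hdeg; case: hG => _ _ h3 h4 h5.
have e1 : inI 3 v (blk 3 0 A * G U - G U * blk 3 3 A).
  have := inIB (inIB hZ (h3 A U)) (inIN (h4 A U)).
  rewrite /ZG (linB G1); apply: inI_eq; ring.
have [q [hq e2]] := h5 1%N U hU.
have e3 : inI 3 v (blk 3 0 A * q - q * blk 3 3 A).
  have := inID (inIB e1 (inIMl (blk 3 0 A) e2)) (inIMr (blk 3 3 A) e2).
  by apply: inI_eq; ring.
have := inID e2 (hdeg q hq e3); rewrite /ZG subrK //.
Qed.

End Main.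

Notation W232 := [:: 2%N; 3%N; 2%N].
Notation W323 := [:: 3%N; 2%N; 3%N].

Section Case1.
Variable G : BPoly 3 -> BPoly 3.
Hypothesis hG : good 3 W232 W323 G.
Hypothesis hG1 : inI 3 W323 (G 1).

Let F00 := @gen_fix W232 0 isT isT isT 0 0 4 isT isT isT isT.
Let F03 := @gen_fix W232 0 isT isT isT 3 3 7 isT isT isT isT.
Let S0 := @gen_sum W232 0 isT isT isT 1 2 5 6 isT isT isT isT.
Let P0 := @gen_prod W232 0 isT isT isT 1 2 5 6 isT isT isT isT.
Let F10 := @gen_fix W232 1 isT isT isT 0 4 8 isT isT isT isT.
Let F11 := @gen_fix W232 1 isT isT isT 1 5 9 isT isT isT isT.
Let F23 := @gen_fix W232 2 isT isT isT 3 11 15 isT isT isT isT.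
Let S2 := @gen_sum W232 2 isT isT isT 9 10 13 14 isT isT isT isT.
Let P2 := @gen_prod W232 2 isT isT isT 9 10 13 14 isT isT isT isT.

Let ZX' p n (h : outer n) := @ZX _ _ _ hG p n h.

Lemma case1_step p : ZG W323 G p -> ZG W323 G (p * XX 3 5) ->
  forall i, ltn i 16%N -> ZG W323 G (p * XX 3 i) /\ ZG W323 G (p * XX 3 5 * XX 3 i).
Proof.
move=> hp hpU i hi.
have hUU : ZG W323 G (p * XX 3 5 * XX 3 5).
  apply: (Zcong hG (q := p * XX 3 5 * XX 3 1 + p * XX 3 5 * XX 3 2 - p * XX 3 1 * XX 3 2)).
    have := inID (inIMl (- (p * XX 3 5)) S0) (inIMl p P0); apply: inI_eq; ring.
  apply: (ZB hG); [apply: (ZD hG); apply: ZX' => // | apply: ZX' => //; apply: ZX' => //].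
case: i hi => [|[|[|[|[|[|[|[|[|[|[|[|[|[|[|[|i]]]]]]]]]]]]]]]] hi //.
- by split; apply: ZX'.
- by split; apply: ZX'.
- by split; apply: ZX'.
- by split; apply: ZX'.
- split.
    apply: (Zcong hG (q := p * XX 3 0)); last by apply: ZX'.
    by have := inIMl (- p) F00; apply: inI_eq; ring.
  apply: (Zcong hG (q := p * XX 3 5 * XX 3 0)); last by apply: ZX'.
  by have := inIMl (- (p * XX 3 5)) F00; apply: inI_eq; ring.
- split.
    apply: (Zcong hG (q := p * XX 3 1 + p * XX 3 2 - p * XX 3 5)).
      by have := inIMl (- p) S0; apply: inI_eq; ring.
    by apply: (ZB hG) => //; apply: (ZD hG); apply: ZX'.
  apply: (Zcong hG (q := p * XX 3 1 * XX 3 2)); last by apply: ZX' => //; apply: ZX'.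
  by have := inIMl (- p) P0; apply: inI_eq; ring.
- split.
    apply: (Zcong hG (q := p * XX 3 3)); last by apply: ZX'.
    by have := inIMl (- p) F03; apply: inI_eq; ring.
  apply: (Zcong hG (q := p * XX 3 5 * XX 3 3)); last by apply: ZX'.
  by have := inIMl (- (p * XX 3 5)) F03; apply: inI_eq; ring.
- split.
    apply: (Zcong hG (q := p * XX 3 0)); last by apply: ZX'.
    by have := inID (inIMl (- p) F10) (inIMl (- p) F00); apply: inI_eq; ring.
  apply: (Zcong hG (q := p * XX 3 5 * XX 3 0)); last by apply: ZX'.
  by have := inID (inIMl (- (p * XX 3 5)) F10) (inIMl (- (p * XX 3 5)) F00); apply: inI_eq; ring.
- split.
    apply: (Zcong hG (q := p * XX 3 5)) => //.
    by have := inIMl (- p) F11; apply: inI_eq; ring.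
  apply: (Zcong hG (q := p * XX 3 5 * XX 3 5)) => //.
  by have := inIMl (- (p * XX 3 5)) F11; apply: inI_eq; ring.
- split.
    apply: (Zcong hG (q := p * XX 3 13 + p * XX 3 14 - p * XX 3 5)).
      by have := inID (inIMl p S2) (inIMl p F11); apply: inI_eq; ring.
    by apply: (ZB hG) => //; apply: (ZD hG); apply: ZX'.
  apply: (Zcong hG (q := p * XX 3 13 * XX 3 14)); last by apply: ZX' => //; apply: ZX'.
  by have := inID (inIMl (p * XX 3 10) F11) (inIMl p P2); apply: inI_eq; ring.
- split.
    apply: (Zcong hG (q := p * XX 3 15)); last by apply: ZX'.
    by have := inIMl p F23; apply: inI_eq; ring.
  apply: (Zcong hG (q := p * XX 3 5 * XX 3 15)); last by apply: ZX'.
  by have := inIMl (p * XX 3 5) F23; apply: inI_eq; ring.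
- by split; apply: ZX'.
- by split; apply: ZX'.
- by split; apply: ZX'.
- by split; apply: ZX'.
Qed.

Lemma case1_key : ZG W323 G (XX 3 5).
Proof.
apply: (Zkey hG (A := 'X_(inord 1) + 'X_(inord 2))).
- by rewrite /XX dhomogX /= mdeg1.
- have hL : blk 3 0 ('X_(inord 1) + 'X_(inord 2)) = XX 3 1 + XX 3 2 by rewrite !blkD !blkX !inordK.
  have hR : blk 3 3 ('X_(inord 1) + 'X_(inord 2)) = XX 3 13 + XX 3 14 by rewrite !blkD !blkX !inordK.
  rewrite hL hR.
  have hT : ZG W323 G ((XX 3 1 + XX 3 2) * XX 3 5 - XX 3 1 * XX 3 2
                      - (XX 3 13 + XX 3 14) * XX 3 5 + XX 3 13 * XX 3 14).
    apply: (ZI hG); have := inID (inID (inIMl (XX 3 5) S0) (inIMl (-1) P0))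
       (inID (inID (inIMl (XX 3 9) S2) (inIMl (-1) P2))
             (inIMl (XX 3 5 + XX 3 9 - XX 3 13 - XX 3 14) F11)).
    by apply: inI_eq; ring.
  have := ZB hG (ZD hG hT (ZXX hG hG1 (a := 1) (b := 2) isT isT)) (ZXX hG hG1 (a := 13) (b := 14) isT isT).
  by rewrite /ZG; apply: inI_eq; congr (G _); ring.
- exact: deg1_323.
Qed.

Lemma case1_all p : inI 3 W323 (G p).
Proof. exact: (Z_all hG hG1 case1_step case1_key). Qed.
End Case1.



Section Case2.
Variable G : BPoly 3 -> BPoly 3.
Hypothesis hG : good 3 W323 W232 G.
Hypothesis hG1 : inI 3 W232 (G 1).

Let F00 := @gen_fix W323 0 isT isT isT 0 0 4 isT isT isT isT.
Let F01 := @gen_fix W323 0 isT isT isT 1 1 5 isT isT isT isT.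
Let S0 := @gen_sum W323 0 isT isT isT 2 3 6 7 isT isT isT isT.
Let P0 := @gen_prod W323 0 isT isT isT 2 3 6 7 isT isT isT isT.
Let F10 := @gen_fix W323 1 isT isT isT 0 4 8 isT isT isT isT.
Let F13 := @gen_fix W323 1 isT isT isT 3 7 11 isT isT isT isT.
Let S1 := @gen_sum W323 1 isT isT isT 5 6 9 10 isT isT isT isT.
Let F21 := @gen_fix W323 2 isT isT isT 1 9 13 isT isT isT isT.
Let S2 := @gen_sum W323 2 isT isT isT 10 11 14 15 isT isT isT isT.
Let P2 := @gen_prod W323 2 isT isT isT 10 11 14 15 isT isT isT isT.

Let ZX' p n (h : outer n) := @ZX _ _ _ hG p n h.

Lemma case2_step p : ZG W232 G p -> ZG W232 G (p * XX 3 6) ->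
  forall i, ltn i 16%N -> ZG W232 G (p * XX 3 i) /\ ZG W232 G (p * XX 3 6 * XX 3 i).
Proof.
move=> hp hpU i hi.
have hUU : ZG W232 G (p * XX 3 6 * XX 3 6).
  apply: (Zcong hG (q := p * XX 3 6 * XX 3 2 + p * XX 3 6 * XX 3 3 - p * XX 3 2 * XX 3 3)).
    have := inID (inIMl (- (p * XX 3 6)) S0) (inIMl p P0); apply: inI_eq; ring.
  apply: (ZB hG); [apply: (ZD hG); apply: ZX' => // | apply: ZX' => //; apply: ZX' => //].
case: i hi => [|[|[|[|[|[|[|[|[|[|[|[|[|[|[|[|i]]]]]]]]]]]]]]]] hi //.
- by split; apply: ZX'.
- by split; apply: ZX'.
- by split; apply: ZX'.
- by split; apply: ZX'.
- split.
    apply: (Zcong hG (q := p * XX 3 0)); last by apply: ZX'.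
    by have := inIMl (- p) F00; apply: inI_eq; ring.
  apply: (Zcong hG (q := p * XX 3 6 * XX 3 0)); last by apply: ZX'.
  by have := inIMl (- (p * XX 3 6)) F00; apply: inI_eq; ring.
- split.
    apply: (Zcong hG (q := p * XX 3 1)); last by apply: ZX'.
    by have := inIMl (- p) F01; apply: inI_eq; ring.
  apply: (Zcong hG (q := p * XX 3 6 * XX 3 1)); last by apply: ZX'.
  by have := inIMl (- (p * XX 3 6)) F01; apply: inI_eq; ring.
- split.
    apply: (Zcong hG (q := p * XX 3 2 + p * XX 3 3 - p * XX 3 6)).
      by have := inIMl (- p) S0; apply: inI_eq; ring.
    by apply: (ZB hG) => //; apply: (ZD hG); apply: ZX'.
  apply: (Zcong hG (q := p * XX 3 2 * XX 3 3)); last by apply: ZX' => //; apply: ZX'.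
  by have := inIMl (- p) P0; apply: inI_eq; ring.
- split.
    apply: (Zcong hG (q := p * XX 3 0)); last by apply: ZX'.
    by have := inID (inIMl (- p) F10) (inIMl (- p) F00); apply: inI_eq; ring.
  apply: (Zcong hG (q := p * XX 3 6 * XX 3 0)); last by apply: ZX'.
  by have := inID (inIMl (- (p * XX 3 6)) F10) (inIMl (- (p * XX 3 6)) F00); apply: inI_eq; ring.
- split.
    apply: (Zcong hG (q := p * XX 3 13)); last by apply: ZX'.
    by have := inIMl p F21; apply: inI_eq; ring.
  apply: (Zcong hG (q := p * XX 3 6 * XX 3 13)); last by apply: ZX'.
  by have := inIMl (p * XX 3 6) F21; apply: inI_eq; ring.
- split.
    apply: (Zcong hG (q := p * XX 3 1 + p * XX 3 6 - p * XX 3 13)).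
      by have := inID (inID (inIMl (- p) F01) (inIMl (- p) F21)) (inIMl (- p) S1); apply: inI_eq; ring.
    by apply: (ZB hG); [apply: (ZD hG) => //; apply: ZX' | apply: ZX'].
  apply: (Zcong hG (q := p * XX 3 6 * XX 3 1 + p * XX 3 6 * XX 3 6 - p * XX 3 6 * XX 3 13)).
    have := inID (inID (inIMl (- (p * XX 3 6)) F01) (inIMl (- (p * XX 3 6)) F21)) (inIMl (- (p * XX 3 6)) S1).
    by apply: inI_eq; ring.
  by apply: (ZB hG); [apply: (ZD hG) => //; apply: ZX' | apply: ZX'].
- split.
    apply: (Zcong hG (q := p * XX 3 2 + p * XX 3 3 - p * XX 3 6)).
      by have := inID (inIMl (- p) F13) (inIMl (- p) S0); apply: inI_eq; ring.
    by apply: (ZB hG) => //; apply: (ZD hG); apply: ZX'.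
  apply: (Zcong hG (q := p * XX 3 2 * XX 3 3)); last by apply: ZX' => //; apply: ZX'.
  by have := inID (inIMl (- (p * XX 3 6)) F13) (inIMl (- p) P0); apply: inI_eq; ring.
- by split; apply: ZX'.
- by split; apply: ZX'.
- by split; apply: ZX'.
- by split; apply: ZX'.
Qed.

Lemma case2_key : ZG W232 G (XX 3 6).
Proof.
apply: (Zkey hG (A := 'X_(inord 1) + 'X_(inord 1) + 'X_(inord 2) + 'X_(inord 3))).
- by rewrite /XX dhomogX /= mdeg1.
- have hL : blk 3 0 ('X_(inord 1) + 'X_(inord 1) + 'X_(inord 2) + 'X_(inord 3)) = XX 3 1 + XX 3 1 + XX 3 2 + XX 3 3 by rewrite !blkD !blkX !inordK.
  have hR : blk 3 3 ('X_(inord 1) + 'X_(inord 1) + 'X_(inord 2) + 'X_(inord 3)) = XX 3 13 + XX 3 13 + XX 3 14 + XX 3 15 by rewrite !blkD !blkX !inordK.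
  rewrite hL hR.
  have hT : ZG W232 G (XX 3 6 * (XX 3 1 + XX 3 1 + XX 3 2 + XX 3 3 - (XX 3 13 + XX 3 13 + XX 3 14 + XX 3 15))
       + (XX 3 1 - XX 3 13) ^+ 2 - (XX 3 14 + XX 3 15) * (XX 3 1 - XX 3 13) + XX 3 14 * XX 3 15 - XX 3 2 * XX 3 3).
    apply: (ZI hG).
    have := inID (inID (inID (inIMl (XX 3 10) S2) (inIMl (-1) P2))
       (inIMl (XX 3 10 + XX 3 6 + XX 3 1 - XX 3 13 - XX 3 14 - XX 3 15)
          (inID (inID F01 F21) S1)))
       (inID (inIMl (XX 3 6) S0) (inIMl (-1) P0)).
    by apply: inI_eq; ring.
  have hO : ZG W232 G (XX 3 1 * XX 3 1 - XX 3 1 * XX 3 13 - XX 3 1 * XX 3 13 + XX 3 13 * XX 3 13 - XX 3 14 * XX 3 1 + XX 3 14 * XX 3 13 - XX 3 15 * XX 3 1 + XX 3 15 * XX 3 13 + XX 3 14 * XX 3 15 - XX 3 2 * XX 3 3) := (ZB hG (ZD hG (ZD hG (ZB hG (ZD hG (ZB hG (ZD hG (ZB hG (ZB hG (ZXX hG hG1 (a := 1) (b := 1) isT isT) (ZXX hG hG1 (a := 1) (b := 13) isT isT)) (ZXX hG hG1 (a := 1) (b := 13) isT isT)) (ZXX hG hG1 (a := 13) (b := 13) isT isT)) (ZXX hG hG1 (a := 14) (b := 1) isT isT)) (ZXX hG hG1 (a := 14) (b := 13) isT isT)) (ZXX hG hG1 (a := 15) (b := 1) isT isT)) (ZXX hG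 hG1 (a := 15) (b := 13) isT isT)) (ZXX hG hG1 (a := 14) (b := 15) isT isT)) (ZXX hG hG1 (a := 2) (b := 3) isT isT)).
  have := ZB hG hT hO.
  by rewrite /ZG; apply: inI_eq; congr (G _); ring.
- exact: deg1_232.
Qed.

Lemma case2_all p : inI 3 W232 (G p).
Proof. exact: (Z_all hG hG1 case2_step case2_key). Qed.
End Case2.

Section LinSupp.
Variables (n : nat) (V : lmodType R) (Phi : 'X_{1..n} -> V).
Definition Lin (p : {mpoly R[n]}) : V := \sum_(m <- msupp p) p@_m *: Phi m.

Lemma Lin_ext p r : uniq r -> {subset msupp p <= r} ->
  Lin p = \sum_(m <- r) p@_m *: Phi m.
Proof.
move=> ur sub; rewrite [RHS](bigID (fun m => m \in msupp p)) /=.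
rewrite [X in _ = _ + X]big1 ?addr0; last first.
  by move=> m hm; rewrite memN_msupp_eq0 // scale0r.
rewrite -big_filter; apply: perm_big; apply: uniq_perm.
- exact: msupp_uniq.
- exact: filter_uniq.
move=> m; rewrite mem_filter; apply/idP/andP => [h|[]//].
by split=> //; apply: sub.
Qed.

Lemma Lin_lin (a : R) p q : Lin (a *: p + q) = a *: Lin p + Lin q.
Proof.
set r := undup (msupp p ++ msupp q ++ msupp (a *: p + q)).
have ur : uniq r by apply: undup_uniq.
rewrite !(@Lin_ext _ r) //; try (by move=> m hm; rewrite mem_undup !mem_cat hm ?orbT).
rewrite scaler_sumr -big_split /=; apply: eq_bigr => m _.
by rewrite mcoeffD mcoeffZ scalerDl scalerA.
Qed.

Lemma LinX m : Lin 'X_[m] = Phi m.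
Proof. by rewrite /Lin msuppX big_seq1 mcoeffX eqxx scale1r. Qed.
End LinSupp.

Definition O1 (m : 'X_{1..nv 6}) : BPoly 6 :=
  \prod_(i < nv 6 | ltn (divn i 4) 2) 'X_i ^+ m i.
Definition O2 (m : 'X_{1..nv 6}) : BPoly 6 :=
  \prod_(i < nv 6 | ltn 5 (divn i 4)) 'X_i ^+ m i.
Definition Sh : (nv 3).-tuple (BPoly 6) := [tuple ('X_(inord (addn 8 i)) : BPoly 6) | i < nv 3].
Definition mid (m : 'X_{1..nv 6}) : BPoly 3 :=
  \prod_(i < nv 3) 'X_i ^+ m (inord (addn 8 i)).
Definition J (m : 'X_{1..nv 6}) (q : BPoly 3) : BPoly 6 := O1 m * (q \mPo Sh) * O2 m.

Lemma idtensE (F : BPoly 3 -> BPoly 3) p :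
  idtens 2 1 F p = Lin (fun m => J m (F (mid m))) p.
Proof. by []. Qed.

Section BigNat.
Variable V : comPzRingType.
Lemma big_nat_all (F : nat -> V) (P : pred nat) m n :
  (forall i, leq m i -> ltn i n -> P i) ->
  \prod_(m <= i < n | P i) F i = \prod_(m <= i < n) F i.
Proof.
move=> h; rewrite big_nat_cond [RHS]big_nat_cond; apply: eq_bigl => i.
by case: (boolP (leq m i && ltn i n)) => //= /andP [h1 h2]; rewrite h.
Qed.
Lemma big_nat_none (F : nat -> V) (P : pred nat) m n :
  (forall i, leq m i -> ltn i n -> ~~ P i) ->
  \prod_(m <= i < n | P i) F i = 1.
Proof.
move=> h; rewrite big_nat_cond big_pred0 // => i.
by case: (boolP (leq m i && ltn i n)) => //= /andP [h1 h2]; apply/negbTE/h.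
Qed.
Lemma ord2nat (F : nat -> V) (P : pred nat) n :
  \prod_(i < n | P i) F i = \prod_(0 <= i < n | P i) F i.
Proof. by rewrite big_mkord. Qed.
End BigNat.

Definition Xp (m : 'X_{1..nv 6}) (k : nat) : BPoly 6 := 'X_(inord k) ^+ m (inord k).

Lemma O1E m : O1 m = \prod_(0 <= i < 8) Xp m i.
Proof.
rewrite /O1 (eq_bigr (fun i : 'I_(nv 6) => Xp m i)); last by move=> i _; rewrite /Xp inord_val.
rewrite (ord2nat (fun i => Xp m i) (fun i => ltn (divn i 4) 2)).
rewrite (big_cat_nat _ (n := 8)) //= [X in _ * X]big_nat_none ?mulr1; last first.
  by move=> i h1 h2; apply/negP; move: h1 h2; rewrite /ltn /=; lia.
by apply: big_nat_all => i h1 h2; move: h1 h2; rewrite /ltn /=; lia.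
Qed.

Lemma O2E m : O2 m = \prod_(24 <= i < 28) Xp m i.
Proof.
rewrite /O2 (eq_bigr (fun i : 'I_(nv 6) => Xp m i)); last by move=> i _; rewrite /Xp inord_val.
rewrite (ord2nat (fun i => Xp m i) (fun i => ltn 5 (divn i 4))).
rewrite (big_cat_nat _ (n := 24)) //= big_nat_none ?mul1r; last first.
  by move=> i h1 h2; apply/negP; move: h1 h2; rewrite /ltn /=; lia.
by apply: big_nat_all => i h1 h2; move: h1 h2; rewrite /ltn /=; lia.
Qed.

Lemma XmE (m : 'X_{1..nv 6}) : 'X_[m] = \prod_(0 <= i < 8) Xp m i * \prod_(8 <= i < 24) Xp m i
  * \prod_(24 <= i < 28) Xp m i.
Proof.
rewrite mpolyXE_id (eq_bigr (fun i : 'I_(nv 6) => Xp m i)); last by move=> i _; rewrite /Xp inord_val.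
rewrite (ord2nat (fun i => Xp m i) xpredT).
by rewrite (big_cat_nat _ (m := 0) (n := 8) (p := 28)) //= (big_cat_nat _ (m := 8) (n := 24) (p := 28)) //= mulrA.
Qed.

Definition merge (M : 'X_{1..nv 6}) (m' : 'X_{1..nv 3}) : 'X_{1..nv 6} :=
  [multinom (if leq 8 i && ltn i 24 then m' (inord (subn i 8)) else M i) | i < nv 6].

Lemma merge_out M m' i : ~~ (leq 8 i && ltn i 24) -> ltn i 28 -> merge M m' (inord i) = M (inord i).
Proof. by move=> h hi; rewrite /merge mnmE inordK // (negbTE h). Qed.

Lemma merge_in M m' i : ltn i 16 -> merge M m' (inord (addn 8 i)) = m' (inord i).
Proof.
move=> hi; rewrite /merge mnmE inordK; last by move: hi; rewrite /ltn /=; lia.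
rewrite ifT; last by apply/andP; split; move: hi; rewrite /ltn /=; lia.
by rewrite addKn.
Qed.

Lemma J_X M m' : J M 'X_[m'] = 'X_[merge M m'].
Proof.
rewrite /J O1E O2E comp_mpolyX XmE; congr (_ * _ * _).
- apply: eq_big_nat => i /andP [h1 h2]; rewrite /Xp merge_out //.
    by apply/negP => /andP [h3 h4]; move: h2 h3; rewrite /ltn /=; lia.
  by move: h2; rewrite /ltn /=; lia.
- rewrite (big_addn 0 24 8) (_ : subn 24 8 = nv 3) // big_mkord.
  apply: eq_bigr => i _; rewrite tnth_mktuple /Xp (addnC i 8) merge_in ?inord_val //.
  exact: ltn_ord.
- apply: eq_big_nat => i /andP [h1 h2]; rewrite /Xp merge_out //.
    by apply/negP => /andP [h3 h4]; move: h1 h4; rewrite /ltn /=; lia.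
Qed.

Lemma O1_merge M m' : O1 (merge M m') = O1 M.
Proof.
rewrite !O1E; apply: eq_big_nat => i /andP [h1 h2]; rewrite /Xp merge_out //.
  by apply/negP => /andP [h3 h4]; move: h2 h3; rewrite /ltn /=; lia.
by move: h2; rewrite /ltn /=; lia.
Qed.

Lemma O2_merge M m' : O2 (merge M m') = O2 M.
Proof.
rewrite !O2E; apply: eq_big_nat => i /andP [h1 h2]; rewrite /Xp merge_out //.
by apply/negP => /andP [h3 h4]; move: h1 h4; rewrite /ltn /=; lia.
Qed.

Lemma mid_merge M m' : mid (merge M m') = 'X_[m'].
Proof.
rewrite /mid mpolyXE_id; apply: eq_bigr => i _.
rewrite merge_in ?inord_val //; exact: ltn_ord.
Qed.

Lemma J_sum M (r : seq 'X_{1..nv 3}) (c : 'X_{1..nv 3} -> R) (P : 'X_{1..nv 3} -> BPoly 3) :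
  J M (\sum_(m <- r) c m *: P m) = \sum_(m <- r) c m *: J M (P m).
Proof.
rewrite /J raddf_sum /= mulr_sumr mulr_suml; apply: eq_bigr => m _.
by rewrite comp_mpolyZ -scalerAr -scalerAl.
Qed.

Lemma J_B M p q : J M (p - q) = J M p - J M q.
Proof. by rewrite /J rmorphB /= mulrBr mulrBl. Qed.

Lemma idtens_lin F (a : R) p q :
  idtens 2 1 F (a *: p + q) = a *: idtens 2 1 F p + idtens 2 1 F q.
Proof. by rewrite !idtensE Lin_lin. Qed.

Lemma idtens_X F M : idtens 2 1 F 'X_[M] = J M (F (mid M)).
Proof. by rewrite idtensE LinX. Qed.

Lemma idtens_J F M q :
  (forall (a : R) (p q : BPoly 3), F (a *: p + q) = a *: F p + F q) ->
  idtens 2 1 F (J M q) = J M (F q).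
Proof.
move=> hF; rewrite {1}[q]mpolyE J_sum (lin_sum (@idtens_lin F)).
under eq_bigr => m _ do rewrite (linZ (@idtens_lin F)) J_X idtens_X {1}/J O1_merge O2_merge mid_merge -/(J M _).
rewrite -J_sum; congr (J M _).
rewrite [in RHS](mpolyE q) (lin_sum hF); apply: eq_bigr => m _.
by rewrite (linZ hF).
Qed.

Lemma addnRE (x y : nat) : x + y = addn x y. Proof. by []. Qed.
Lemma mulnRE (x y : nat) : x * y = muln x y. Proof. by []. Qed.
Lemma nat4 : (4%:R : nat) = 4%N. Proof. by []. Qed.

Lemma auxSh1 j a : addn 8 (addn (muln 4 j) a) = addn (muln 4 j.+2) a.
Proof. lia. Qed.
Lemma auxSh2 j a : leq j 3 -> ltn a 4 -> ltn (addn (muln 4 j.+2) a) 28.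
Proof. rewrite /ltn /=; lia. Qed.
Lemma auxSh3 j a : leq j 3 -> ltn a 4 -> ltn (addn (muln 4 j) a) 16.
Proof. rewrite /ltn /=; lia. Qed.
Lemma auxSh4 j a : leq j 3 -> ltn a 4 -> ltn (addn 8 (addn (muln 4 j) a)) 28.
Proof. rewrite /ltn /=; lia. Qed.

Lemma blk_Sh j f : leq j 3 -> blk 3 j f \mPo Sh = blk 6 j.+2 f.
Proof.
move=> hj; rewrite /blk compcomp; congr (f \mPo _); apply: eq_from_tnth => a.
rewrite !tnth_mktuple comp_mpolyXU -tnth_nth tnth_mktuple; congr 'X_(_).
have ha := ltn_ord a.
apply: val_inj => /=; rewrite !inordK.
- exact: auxSh1.
- exact: auxSh2.
- exact: auxSh3.
- exact: auxSh4.
- exact: auxSh3.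
Qed.

Lemma Sh_ideal w W q : (forall j, ltn j 3 -> nth 0%N W j.+2 = nth 0%N w j) ->
  inI 3 w q -> inI 6 W (q \mPo Sh).
Proof.
move=> hW [s [hs ->]]; rewrite raddf_sum /=.
exists [seq ((t.1.1 \mPo Sh, t.1.2.+2), t.2) | t <- s]; split.
  move=> t /mapP [t' /hs [h1 h2] ->] /=; split; last by rewrite hW.
  by move: h1; rewrite /ltn /=; lia.
rewrite big_map; apply: eq_big_seq => t /hs [h1 _].
by rewrite rmorphM rmorphB /= !blk_Sh //; first [exact: (ltnW h1) | exact: h1].
Qed.

Lemma J_ideal w W M q : (forall j, ltn j 3 -> nth 0%N W j.+2 = nth 0%N w j) ->
  inI 3 w q -> inI 6 W (J M q).
Proof. by move=> hW hq; rewrite /J; apply: inIMr; apply: inIMl; exact: (Sh_ideal hW hq). Qed.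

Lemma braid_one k u v F : braid_map k u v F -> inI k v (F 1 - 1).
Proof. by case=> _ [_ [_ [_ [_ h]]]]. Qed.

Lemma core (u v : seq nat) (f g : BPoly 3 -> BPoly 3) :
  braid_map 3 u v f -> braid_map 3 v u g ->
  (forall G, good 3 u v G -> inI 3 v (G 1) -> forall p, inI 3 v (G p)) ->
  forall q, inI 3 v (f (g (f q)) - f q).
Proof.
move=> hf hg hall q.
have gf := braid_good hf; have gg := braid_good hg.
have gG := good_sub (good_comp (good_comp gf gg) gf) gf.
apply: (hall _ gG).
exact: (good_cong gf (inI_trans (good_cong gg (braid_one hf)) (braid_one hg))).
Qed.

Lemma final_part (u v W : seq nat) (f g : BPoly 3 -> BPoly 3) :
  braid_map 3 u v f -> braid_map 3 v u g ->
  (forall q, inI 3 v (f (g (f q)) - f q)) ->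
  (forall j, ltn j 3 -> nth 0%N W j.+2 = nth 0%N v j) ->
  forall p : BPoly 6,
    eqB 6 W (idtens 2 1 f (idtens 2 1 g (idtens 2 1 f p))) (idtens 2 1 f p).
Proof.
move=> hf hg hcore hW p; rewrite /eqB.
have [lf _ _ _ _] := braid_good hf; have [lg _ _ _ _] := braid_good hg.
pose D := fun p : BPoly 6 =>
  idtens 2 1 f (idtens 2 1 g (idtens 2 1 f p)) - idtens 2 1 f p.
have hD : forall (a : R) (p q : BPoly 6), D (a *: p + q) = a *: D p + D q.
  move=> a p1 q1; rewrite /D !idtens_lin scalerBr; ring.
suff : inI 6 W (D p) by [].
rewrite (mpolyE p) (lin_sum hD); apply: inI_sum => M; rewrite (linZ hD); apply: inIZ.
rewrite /D !idtens_X !idtens_J // -J_B; apply: J_ideal; [exact: hW | exact: hcore].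
Qed.

Unset Implicit Arguments.
Local Close Scope ring_scope.

Theorem lemma3p9 (f23 f32 : BPoly 3 -> BPoly 3) :
  braid_map 3 [:: 2; 3; 2]%N [:: 3; 2; 3]%N f23 ->
  braid_map 3 [:: 3; 2; 3]%N [:: 2; 3; 2]%N f32 ->
  (forall p : BPoly 6,
     eqB 6 wB (idtens 2 1 f23 (idtens 2 1 f32 (idtens 2 1 f23 p)))
              (idtens 2 1 f23 p)) /\
  (forall p : BPoly 6,
     eqB 6 wA (idtens 2 1 f32 (idtens 2 1 f23 (idtens 2 1 f32 p)))
              (idtens 2 1 f32 p)).
Proof.
move=> h23 h32; split.
- apply: (final_part h23 h32).
    by apply: (core h23 h32) => G hG hG1 p; apply: case1_all.
  by case=> [|[|[|]]].
- apply: (final_part h32 h23).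
    by apply: (core h32 h23) => G hG hG1 p; apply: case2_all.
  by case=> [|[|[|]]].
Qed.
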